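(* For each $u\in(0,1)$, $\phi(u)=(\mathcal E^c_u)'(G(u)-)=(\mathcal E^c_u)'(S(u)-)$.
   Context: Let $\mu,\nu$ be probability measures on $\mathbb R$ with finite first moments and $\mu\le_{cx}\nu$. Put $P_\eta(k)=\int(k-x)^+\eta(dx)$, $D=P_\nu-P_\mu$, and assume $\{k:D(k)>0\}$ is an interval. Let $G$ be any quantile function of $\mu$. For $u\in(0,1)$ let $\mu_u(A)=\mu(A\cap(-\infty,G(u)))+\big(u-\mu((-\infty,G(u)))\big)\delta_{G(u)}(A)$ and $\mathcal E_u=P_\nu-P_{\mu_u}$. $f^c$ is the largest convex minorant of $f$; $Z^f(y)=\inf\{z\ge y: f^c(z)=f(z)\}$. Define $S(u)=Z^{\mathcal E_u}(G(u))$ and $\phi(u)=\inf\partial\mathcal E_u^c(G(u))$ (subdifferential). $h'(x-)$ denotes the left derivative. *)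

(* Defs.v *)
From HB Require Import structures.
From mathcomp Require Import all_boot all_order all_algebra.
From mathcomp Require Import all_classical all_reals all_analysis.
Import Order.TTheory GRing.Theory Num.Theory numFieldNormedType.Exports.

Set Implicit Arguments.
Unset Strict Implicit.
Unset Printing Implicit Defensive.

Local Open Scope classical_set_scope.
Local Open Scope ring_scope.

Section Defs.
Variable R : realType.

Definition finite_first_moment (eta : {measure set R -> \bar R}) : Prop :=
  (\int[eta]_x (`|x|)%:E < +oo)%E.

Definition cx_le (mu nu : {measure set R -> \bar R}) : Prop :=
  forall phi : R -> R, convex_function (E := R^o) setT phi ->
    (\int[mu]_x (phi x)%:E <= \int[nu]_x (phi x)%:E)%E.

Definition Pput (eta : {measure set R -> \bar R}) (k : R) : R :=
  fine (\int[eta]_x (Num.max (k - x) 0)%:E)%E.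

Definition is_quantile (mu : {measure set R -> \bar R}) (G : R -> R) : Prop :=
  forall u : R, 0 < u < 1 ->
    (mu `]-oo, G u[%classic <= u%:E <= mu `]-oo, G u]%classic)%E.

Lemma max0_ge0 (x : R) : 0 <= Num.max x 0.
Proof. by rewrite le_max lexx orbT. Qed.

(* weight of the atom at G u: u - mu((-oo, G u)); it is >= 0 when G is a
   quantile function of mu, the max with 0 only serves to type it as a
   nonnegative number (needed to scale a measure). *)
Definition atom_weight (mu : {measure set R -> \bar R}) (G : R -> R) (u : R)
  : {nonneg R} :=
  NngNum (max0_ge0 (u - fine (mu `]-oo, G u[%classic))).

Definition mu_u (mu : {measure set R -> \bar R}) (G : R -> R) (u : R)
  : {measure set R -> \bar R} :=
  measure_add (mrestr mu (measurable_itv `]-oo, G u[))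
              (mscale (atom_weight mu G u) \d_(G u)).

Definition Eu (mu nu : {measure set R -> \bar R}) (G : R -> R) (u : R)
  : R -> R :=
  fun k => Pput nu k - Pput (mu_u mu G u) k.

Definition conv_minorant (f : R -> R) (x : R) : R :=
  sup [set g x | g in [set g : R -> R |
         convex_function (E := R^o) setT g /\ (forall z, g z <= f z)]].

Definition Zf (f : R -> R) (y : R) : R :=
  inf [set z | y <= z /\ conv_minorant f z = f z].

Definition subdiff (f : R -> R) (x : R) : set R :=
  [set s | forall z, f x + s * (z - x) <= f z].

Definition Sfun (mu nu : {measure set R -> \bar R}) (G : R -> R) (u : R) : R :=
  Zf (Eu mu nu G u) (G u).

Definition phifun (mu nu : {measure set R -> \bar R}) (G : R -> R) (u : R) : R :=
  inf (subdiff (conv_minorant (Eu mu nu G u)) (G u)).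

Definition has_left_deriv (h : R -> R) (x l : R) : Prop :=
  (fun y => (h y - h x) / (y - x)) @ x^'- --> l.

End Defs.

(* Main.v *)
Require Import Defs.
From HB Require Import structures.
From mathcomp Require Import all_boot all_order all_algebra.
From mathcomp Require Import all_classical all_reals all_analysis.
From mathcomp Require Import ring lra measurable_realfun.
Import Order.TTheory GRing.Theory Num.Theory numFieldNormedType.Exports.
Local Open Scope classical_set_scope.
Local Open Scope ring_scope.
Set Implicit Arguments.
Unset Strict Implicit.
Unset Printing Implicit Defensive.


Section Cvx.
Variable R : realType.
Implicit Types (f g h : R -> R) (x y z : R).

Definition cvx h := forall x y t, 0 <= t <= 1 ->
  h (t * x + (1 - t) * y) <= t * h x + (1 - t) * h y.

Lemma cvxP h : convex_function (E := R^o) setT h <-> cvx h.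
Proof.
split.
- move=> H x y t /andP[t0 t1].
  have := H (Itv01 t0 t1) x y; rewrite !inE /= => /(_ I I).
  by rewrite !convRE.
- move=> H t x y _ _; rewrite !convRE.
  have := H x y t%:num; rewrite ge0 le1 => /(_ isT).
  by [].
Qed.

Lemma aff_cvx (a b : R) : cvx (fun z => a * z + b).
Proof.
move=> x y t _.
suff -> : a * (t * x + (1 - t) * y) + b = t * (a * x + b) + (1 - t) * (a * y + b) by [].
ring.
Qed.

Lemma divle (a b c d : R) : 0 < b -> 0 < d -> a * d <= c * b -> a / b <= c / d.
Proof.
move=> b0 d0 H; rewrite ler_pdivrMr // mulrAC ler_pdivlMr //.
Qed.

Lemma eqle (a b : R) : a = b -> a <= b.
Proof. by move=> ->. Qed.

Lemma cvx_chord h x y z : cvx h -> x < y -> y < z ->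
  h y * (z - x) <= (z - y) * h x + (y - x) * h z.
Proof.
move=> hc xy yz.
have zx : 0 < z - x by lra.
pose t := (z - y) / (z - x).
have t0 : 0 <= t by rewrite /t divr_ge0 //; lra.
have t1 : t <= 1 by rewrite /t ler_pdivrMr //; lra.
have ye : y = t * x + (1 - t) * z.
  rewrite /t; field; lra.
have := hc x z t; rewrite t0 t1 -ye => /(_ isT) H.
have -> : (z - y) = t * (z - x) by rewrite /t; field; lra.
have -> : (y - x) = (1 - t) * (z - x) by rewrite /t; field; lra.
apply: le_trans (ler_wpM2r (ltW zx) H) _.
by apply: eqle; ring.
Qed.
End Cvx.

Section LD.
Variable R : realType.
Variable p : R -> R.
Hypothesis pc : cvx p.
Variable x : R.
Definition qt y := (p y - p x) / (y - x).
Definition LS := [set qt y | y in [set y | y < x]].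
Definition Ld := sup LS.

Lemma qt_le_right y z : y < x -> x < z -> qt y <= (p z - p x) / (z - x).
Proof.
move=> yx xz; rewrite /qt.
have -> : (p y - p x) / (y - x) = (p x - p y) / (x - y).
  by rewrite -mulrNN -invrN !opprB.
apply: divle; try lra.
have := cvx_chord pc yx xz; nra.
Qed.

Lemma qt_mono y1 y2 : y1 < y2 -> y2 < x -> qt y1 <= qt y2.
Proof.
move=> y12 y2x; rewrite /qt.
have -> : (p y1 - p x) / (y1 - x) = (p x - p y1) / (x - y1).
  by rewrite -mulrNN -invrN !opprB.
have -> : (p y2 - p x) / (y2 - x) = (p x - p y2) / (x - y2).
  by rewrite -mulrNN -invrN !opprB.
apply: divle; try lra.
have := cvx_chord pc y12 y2x; nra.
Qed.

Lemma LS_ne : LS !=set0.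
Proof. by exists (qt (x - 1)); exists (x - 1) => //=; lra. Qed.

Lemma LS_ub : ubound LS ((p (x + 1) - p x) / (x + 1 - x)).
Proof. by move=> _ [y /= yx <-]; apply: qt_le_right => //; lra. Qed.

Lemma LS_hub : has_ubound LS.
Proof. by exists ((p (x + 1) - p x) / (x + 1 - x)); exact: LS_ub. Qed.

Lemma qt_le_Ld y : y < x -> qt y <= Ld.
Proof. by move=> yx; apply: ub_le_sup; [exact: LS_hub | exists y]. Qed.

Lemma Ld_sub : subdiff p x Ld.
Proof.
move=> z.
have [zx|xz|->] := ltgtP z x.
- have := qt_le_Ld zx; rewrite /qt => H.
  have e : (p z - p x) / (z - x) * (z - x) = p z - p x.
    by rewrite mulfVK //; apply/eqP; lra.
  nra.
- have : Ld <= (p z - p x) / (z - x).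
    apply: ge_sup; first exact: LS_ne.
    by move=> _ [y /= yx <-]; apply: qt_le_right.
  rewrite ler_pdivlMr; last lra.
  lra.
- by rewrite subrr mulr0 addr0.
Qed.

Lemma Ld_lb s : subdiff p x s -> Ld <= s.
Proof.
move=> hs; apply: ge_sup; first exact: LS_ne.
move=> _ [y /= yx <-]; rewrite /qt.
have := hs y => H.
rewrite ler_ndivrMr; last lra.
lra.
Qed.

Lemma inf_subdiff : inf (subdiff p x) = Ld.
Proof.
apply/eqP; rewrite eq_le; apply/andP; split.
- apply: ge_inf; last exact: Ld_sub.
  by exists Ld => s /Ld_lb.
- apply: lb_le_inf; first by exists Ld; exact: Ld_sub.
  by move=> s /Ld_lb.
Qed.

Lemma left_deriv : has_left_deriv p x Ld.
Proof.
apply/cvgrPdist_le => e e0.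
have [_ [y0 /= y0x <-] hy0] := sup_adherent e0 (conj LS_ne LS_hub).
near=> y.
have yx : y < x by near: y; exact: nbhs_left_lt.
have y0y : y0 < y by near: y; exact: nbhs_left_gt.
have h1 := qt_mono y0y yx.
have h2 := qt_le_Ld yx.
rewrite /qt in h1 h2 hy0 *.
rewrite ger0_norm; [ | rewrite subr_ge0 //].
rewrite /Ld in hy0 *; lra.
Unshelve. all: by end_near.
Qed.
End LD.

Lemma near_delta (R : realType) (b : R) (P : R -> Prop) :
  (\forall t \near b, P t) -> exists2 d : R, 0 < d & forall t, `|b - t| < d -> P t.
Proof.
by move/nbhs_normP => [d /= d0 hd]; exists d => // t ht; apply: hd => /=.
Qed.

Lemma cont_delta (R : realType) (f : R -> R) (b e : R) : continuous f -> 0 < e ->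
  exists2 d : R, 0 < d & forall t, `|b - t| < d -> `|f b - f t| < e.
Proof.
move=> fc e0; apply: near_delta.
by have /cvgrPdist_lt /(_ e e0) := fc b.
Qed.

Section CM.
Variable R : realType.
Variable f : R -> R.
Definition CMset := [set g : R -> R |
  convex_function (E := R^o) setT g /\ (forall z, g z <= f z)].
Hypothesis hne : exists g0, CMset g0.
Local Notation ph := (conv_minorant f).

Lemma cm_le x : ph x <= f x.
Proof.
apply: ge_sup.
- by have [g0 hg0] := hne; exists (g0 x), g0.
- by move=> _ [g [_ hg] <-].
Qed.

Lemma cm_ge g x : CMset g -> g x <= ph x.
Proof.
move=> hg; apply: ub_le_sup; last by exists g.
by exists (f x) => _ [g' [_ hg'] <-].
Qed.

Lemma cm_cvx : cvx ph.
Proof.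
move=> x y t /andP[t0 t1]; apply: ge_sup.
- by have [g0 hg0] := hne; exists (g0 (t * x + (1 - t) * y)), g0.
move=> _ [g hg <-].
have := (cvxP g).1 hg.1 x y t; rewrite t0 t1 => /(_ isT) H.
apply: le_trans H _; apply: lerD; apply: ler_wpM2l; try lra;
  exact: cm_ge.
Qed.

Lemma aff_CM a c : (forall z, a * z + c <= f z) -> CMset (fun z => a * z + c).
Proof. by move=> H; split => //; apply/cvxP; exact: aff_cvx. Qed.
End CM.

Section Aff.
Variable R : realType.
Variable f : R -> R.
Hypothesis hne : exists g0, CMset f g0.
Hypothesis fc : continuous f.
Variable y0 : R.
Local Notation ph := (conv_minorant f).
Definition Tset := [set z | y0 <= z /\ ph z = f z].
Hypothesis Tne : Tset !=set0.
Local Notation L := (Ld ph y0).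
Definition l0 z := ph y0 + L * (z - y0).

Lemma l0_le z : l0 z <= ph z.
Proof.
have := @Ld_sub _ _ (cm_cvx hne) y0 z; rewrite /l0; lra.
Qed.

Lemma T_hlb : has_lbound Tset.
Proof. by exists y0 => z []. Qed.

Lemma S_ge : y0 <= inf Tset.
Proof. by apply: lb_le_inf => // z []. Qed.

Lemma S_le z : Tset z -> inf Tset <= z.
Proof. by move=> Tz; apply: ge_inf => //; exact: T_hlb. Qed.

Lemma affine_GS z : y0 <= z -> z <= inf Tset -> ph z = l0 z.
Proof.
move=> yz zS; apply/eqP; rewrite eq_le l0_le andbT.
rewrite leNgt; apply/negP => hz1.
pose h w := ph w - l0 w.
have h0 w : 0 <= h w by have := l0_le w; rewrite /h; lra.
have hy0 : h y0 = 0 by rewrite /h /l0 subrr mulr0 addr0 subrr.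
have hc : cvx h.
  move=> x y t t01; rewrite /h.
  have := cm_cvx hne x y t01.
  suff -> : l0 (t * x + (1 - t) * y) = t * l0 x + (1 - t) * l0 y by lra.
  rewrite /l0; ring.
have hz1' : 0 < h z by rewrite /h; lra.
pose B := [set w | (y0 <= w <= z) /\ h w = 0].
have Bne : B !=set0 by exists y0; split => //; rewrite lexx yz.
have Bub : ubound B z by move=> w [/andP[]].
have Bhs : has_sup B by split => //; exists z.
pose b := sup B.
have yb : y0 <= b by apply: ub_le_sup; [exists z | split => //; rewrite lexx yz].
have bz : b <= z by apply: ge_sup.
have hb : h b = 0.
  apply/eqP; rewrite eq_le h0 andbT leNgt; apply/negP => hbp.
  pose K := h (b + 1).
  have K0 : 0 <= K by exact: h0.
  pose e := h b / (K + 1).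
  have e0 : 0 < e by rewrite /e divr_gt0 //; lra.
  have eK : e * (K + 1) = h b by rewrite /e mulfVK //; apply/eqP; lra.
  have [w [/andP[yw wz] hw] hwe] := sup_adherent e0 Bhs.
  have wb : w <= b by apply: (ub_le_sup Bhs.2); split => //; rewrite yw wz.
  have [wb'|wb'] := ltP w b; last first.
    have wbe : w = b by apply/eqP; rewrite eq_le wb wb'.
    by move: hbp; rewrite -wbe hw ltxx.
  have := cvx_chord hc wb' (ltac:(lra) : b < b + 1).
  rewrite hw mulr0 add0r -/K => ch.
  have : h b <= h b * (b + 1 - w) by rewrite ler_peMr; lra.
  rewrite -/b in hwe.
  nra.
have bz1 : b < z.
  rewrite lt_neqAle bz andbT; apply/negP => /eqP bze.
  by move: hz1'; rewrite -bze hb ltxx.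
have hpos w : b < w -> w <= z -> 0 < h w.
  move=> bw wz; rewrite lt_neqAle h0 andbT; apply/negP => /eqP hw0.
  have : w <= b by apply: (ub_le_sup Bhs.2); split => //; rewrite wz andbT; lra.
  lra.
have fb : ph b < f b.
  rewrite lt_neqAle cm_le // andbT; apply/negP => /eqP e.
  have := S_le (conj yb e : Tset b); lra.
pose D := f b - ph b.
have D0 : 0 < D by rewrite /D; lra.
have [d0 d0p hd0] := cont_delta b (e := D / 4) fc (ltac:(lra)).
pose M := `|L| + 1.
have M0 : 0 < M by rewrite /M; have := normr_ge0 L; lra.
pose d := Num.min (d0 / 2) (Num.min (z - b) (D / (4 * M))).
have d1 : d <= d0 / 2 by rewrite /d ge_min lexx.
have d2 : d <= z - b by rewrite /d !ge_min lexx orbT.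
have d3 : d <= D / (4 * M) by rewrite /d !ge_min lexx !orbT.
have dp : 0 < d by rewrite /d !lt_min; apply/and3P; split; rewrite ?divr_gt0 //; lra.
have dM : `|L| * d <= D / 4.
  move: d3; rewrite ler_pdivlMr; last lra.
  rewrite /M => H; have := normr_ge0 L; nra.
have hl0b : l0 b = ph b by have := hb; rewrite /h; lra.
have near w : `|w - b| <= d -> l0 w + D / 2 <= f w.
  move=> wb.
  have := hd0 w; rewrite distrC; move/(_ (ltac:(lra))) => fw.
  have e1 : l0 w = l0 b + L * (w - b) by rewrite /l0; ring.
  have e2 : L * (w - b) <= `|L| * `|w - b|.
    by rewrite -normrM ler_norm.
  have e3 : `|L| * `|w - b| <= `|L| * d by rewrite ler_wpM2l.
  have e4 : f b - f w <= `|f b - f w| by rewrite ler_norm.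
  rewrite /D in e4 dM fw *.
  lra.
pose c := h (b + d) / d.
have c0 : 0 < c by rewrite /c divr_gt0 //; apply: hpos; lra.
have right w : b + d <= w -> c * (w - b) <= h w.
  move=> bdw.
  have [bdw'|bdw'] := ltP (b + d) w; last first.
    have -> : w = b + d by apply/eqP; rewrite eq_le bdw andbT.
    by rewrite /c addrAC subrr add0r mulfVK //; apply/eqP; lra.
  have := cvx_chord hc (ltac:(lra) : b < b + d) bdw'.
  rewrite hb mulr0 add0r => ch.
  rewrite /c mulrAC ler_pdivrMr //.
  have e : b + d - b = d by ring.
  rewrite e in ch; lra.
pose t := Num.min (c / 2) (D / (4 * d)).
have t0 : 0 < t by rewrite /t lt_min; apply/andP; split; rewrite divr_gt0 //; lra.
have t1 : t <= c / 2 by rewrite /t ge_min lexx.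
have t2 : t * d <= D / 4.
  have : t <= D / (4 * d) by rewrite /t ge_min lexx orbT.
  rewrite ler_pdivlMr; last lra. lra.
pose a2 := L + t.
pose c2 := ph y0 - L * y0 + t * d - t * b.
have l2e w : a2 * w + c2 = l0 w + t * d + t * (w - b) by rewrite /a2 /c2 /l0; ring.
have l2le : forall w, a2 * w + c2 <= f w.
  move=> w; rewrite l2e.
  have [wl|wl] := ltP w (b - d).
    have := l0_le w; have := cm_le hne w.
    have : t * (w - b) <= - (t * d) by rewrite -mulrN ler_wpM2l //; lra.
    lra.
  have [wr|wr] := ltP w (b + d).
    have : `|w - b| <= d by rewrite ler_norml; apply/andP; split; lra.
    move/near => H.
    have : t * (w - b) <= t * d by rewrite ler_wpM2l //; lra.
    lra.
  have := right w wr; have := cm_le hne w; rewrite /h.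
  have : t * d <= t * (w - b) by rewrite ler_wpM2l //; lra.
  have : t * (w - b) <= c / 2 * (w - b) by rewrite ler_wpM2r //; lra.
  nra.
have := cm_ge b (aff_CM l2le).
rewrite l2e hl0b subrr mulr0 addr0.
have : 0 < t * d by rewrite mulr_gt0.
lra.
Qed.
End Aff.

Theorem abstract_main (R : realType) (f : R -> R) (y0 : R) :
  (exists g0, CMset f g0) -> continuous f -> Tset f y0 !=set0 ->
  has_left_deriv (conv_minorant f) y0 (inf (subdiff (conv_minorant f) y0)) /\
  has_left_deriv (conv_minorant f) (Zf f y0) (inf (subdiff (conv_minorant f) y0)).
Proof.
move=> hne fc Tne.
have pc := cm_cvx hne.
rewrite inf_subdiff //; split; first exact: left_deriv.
rewrite /Zf -/(Tset f y0).
have Sg := S_ge Tne.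
have [yS|] := ltP y0 (inf (Tset f y0)); last first.
  move=> Sy; have -> : inf (Tset f y0) = y0 by apply/eqP; rewrite eq_le Sy Sg.
  exact: left_deriv.
apply: cvg_near_cst.
near=> y.
have yx : y < inf (Tset f y0) by near: y; exact: nbhs_left_lt.
have y0y : y0 < y by near: y; exact: nbhs_left_gt.
rewrite (affine_GS hne fc (ltW y0y) (ltW yx)).
rewrite (affine_GS hne fc Sg (lexx _)).
rewrite /l0.
have -> : conv_minorant f y0 + Ld (conv_minorant f) y0 * (y - y0) -
  (conv_minorant f y0 + Ld (conv_minorant f) y0 * (inf (Tset f y0) - y0)) =
  Ld (conv_minorant f) y0 * (y - inf (Tset f y0)) by ring.
by rewrite mulfK //; apply/eqP; lra.
Unshelve. all: by end_near.
Qed.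

Lemma contaff (R : realType) (f : R -> R) (c1 c0 : R) :
  continuous f -> continuous (fun k => f k + (c1 * k + c0)).
Proof.
move=> fc x; apply: cvgD; first exact: fc.
apply: cvgD; last exact: cvg_cst.
by apply: cvgMr; exact: cvg_id.
Qed.

Lemma touch (R : realType) (f : R -> R) (G a b0 : R) :
  continuous f -> 0 < a ->
  (forall k, k <= G -> a * (G - k) <= f k - (a * k + b0)) ->
  (forall K, G <= K -> 0 <= f K - (a * K + b0)) ->
  (forall eta, 0 < eta -> exists2 K, G <= K & f K - (a * K + b0) < eta) ->
  exists z, G <= z /\ exists s, forall k, f z + s * (k - z) <= f k.
Proof.
move=> fc a0 H1 H2 H3.
pose g k := f k - (a * k + b0).
have g0 k : 0 <= g k.
  have [kG|kG] := leP k G; last by apply: H2; lra.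
  by have := H1 k kG; rewrite /g; nra.
have [gG0|gGp] := eqVneq (g G) 0.
  exists G; split => //; exists a => k.
  have := g0 k; move: gG0; rewrite /g; lra.
have gGp' : 0 < g G by rewrite lt_neqAle eq_sym gGp g0.
have [d1 d1p hd1] := cont_delta G (e := g G / 4) fc (ltac:(lra)).
pose m := Num.min (g G / 2) (a * d1).
have m1 : m <= g G / 2 by rewrite /m ge_min lexx.
have m2 : m <= a * d1 by rewrite /m ge_min lexx orbT.
have m0 : 0 < m by rewrite /m lt_min; apply/andP; split; rewrite ?mulr_gt0 //; lra.
have gm k : k <= G -> m <= g k.
  move=> kG.
  have [kn|kf] := ltP (G - k) d1.
    have := hd1 k; rewrite ger0_norm; last lra.
    move/(_ kn) => hf.
    have hf' : f G - f k <= `|f G - f k| by exact: ler_norm.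
    have := H1 k kG; rewrite /g in gGp' m1 hf *.
    have : 0 <= a * (G - k) by rewrite mulr_ge0 //; lra.
    lra.
  have := H1 k kG; rewrite -/(g k) => h.
  have : a * d1 <= a * (G - k) by rewrite ler_wpM2l //; lra.
  lra.
have [K GK gK] := H3 (m / 4) (ltac:(lra)).
rewrite -/(g K) in gK.
pose e := Num.min (a / 2) (m / (4 * (K - G + 1))).
have e1 : e <= a / 2 by rewrite /e ge_min lexx.
have e0 : 0 < e by rewrite /e lt_min; apply/andP; split; rewrite divr_gt0 //; lra.
have e2 : e * (K - G) <= m / 4.
  have : e <= m / (4 * (K - G + 1)) by rewrite /e ge_min lexx orbT.
  rewrite ler_pdivlMr; last lra.
  nra.
pose F k := g k + e * (k - G).
have FL k : k <= G -> m / 2 <= F k.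
  move=> kG; rewrite /F.
  have := gm k kG; have := H1 k kG; rewrite -/(g k).
  have : e * (G - k) <= (a - e) * (G - k) by rewrite ler_wpM2r //; lra.
  nra.
have FR k : G <= k -> e * (k - G) <= F k.
  by move=> Gk; rewrite /F; have := g0 k; lra.
have FK : F K < m / 2 by rewrite /F; lra.
pose K' := K + m / e.
have me : 0 < m / e by rewrite divr_gt0.
have GK' : G <= K' by rewrite /K'; lra.
have Fc : continuous F.
  have -> : F = (fun k => f k + ((e - a) * k + (- b0 - e * G))).
    by apply: funext => k; rewrite /F /g; ring.
  exact: contaff.
have [z zin zmin] := EVT_min GK' (continuous_subspaceT Fc).
move: zin; rewrite in_itv /= => /andP[Gz zK'].
have Fz : F z <= F K.
  apply: zmin; rewrite in_itv /= GK /=; rewrite /K'; lra.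
have Fglob k : F z <= F k.
  have [kG|Gk] := ltP k G; first by have := FL k (ltW kG); lra.
  have [kK|Kk] := leP k K'; first by apply: zmin; rewrite in_itv /= Gk kK.
  have := FR k Gk.
  have : e * (K' - G) <= e * (k - G) by rewrite ler_wpM2l //; lra.
  have : e * (K' - G) >= m.
    rewrite /K'.
    have -> : e * (K + m / e - G) = e * (K - G) + m by field; lra.
    have : 0 <= e * (K - G) by rewrite mulr_ge0 //; lra.
    lra.
  lra.
exists z; split => //; exists (a - e) => k.
have := Fglob k; rewrite /F /g; lra.
Qed.


Definition pp (R : realType) (k x : R) := Num.max (k - x) 0.
Definition cc (R : realType) (k x : R) := Num.max (x - k) 0.

Section Meas.
Variable R : realType.
Variable P : probability R R.
Hypothesis fm : finite_first_moment P.

Lemma mpp (D : set R) (k : R) : measurable_fun D (pp k).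
Proof.
have -> : pp k = (fun x => k - x) \max (cst 0) by [].
apply: measurable_maxr.
  apply: measurable_funB; [exact: measurable_cst | exact: measurable_id].
exact: measurable_cst.
Qed.

Lemma mcc (D : set R) (k : R) : measurable_fun D (cc k).
Proof.
have -> : cc k = (fun x => x - k) \max (cst 0) by [].
apply: measurable_maxr.
  apply: measurable_funB; [exact: measurable_id | exact: measurable_cst].
exact: measurable_cst.
Qed.

Lemma int_id (D : set R) : measurable D -> P.-integrable D (EFin \o id).
Proof.
move=> mD; apply: (integrableS measurableT) => //.
apply/integrableP; split; first exact/measurable_EFinP/measurable_id.
exact: fm.
Qed.

Lemma int_abs (D : set R) : measurable D -> P.-integrable D (EFin \o (fun x : R => `|x|)).
Proof.
move=> mD; have := integrable_norm (int_id mD).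
by [].
Qed.

Lemma int_cst (D : set R) (c : R) : measurable D -> P.-integrable D (EFin \o cst c).
Proof. by move=> mD; exact: finite_measure_integrable_cst. Qed.

Lemma int_pp (D : set R) (k : R) : measurable D -> P.-integrable D (EFin \o pp k).
Proof.
move=> mD.
have hi : P.-integrable D (fun x => ((`|k| + `|x|)%:E)).
  have h2 : P.-integrable D ((EFin \o cst `|k|) \+ (EFin \o (fun x : R => `|x|))).
    by apply: integrableD => //; [exact: int_cst | exact: int_abs].
  apply: eq_integrable h2 => //.
apply: le_integrable hi => //; first by apply/measurable_EFinP; exact: mpp.
move=> x _ /=; rewrite lee_fin.
have p0 : 0 <= pp k x by rewrite /pp le_max lexx orbT.
rewrite (ger0_norm p0) (ger0_norm (addr_ge0 (normr_ge0 k) (normr_ge0 x))).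
rewrite /pp ge_max addr_ge0 // andbT.
have := ler_norm k; have := ler_norm (- x); rewrite normrN; lra.
Qed.

Lemma int_bnd (D : set R) (h : R -> R) (c : R) : measurable D ->
  measurable_fun D h -> (forall x, `|h x| <= `|c| + `|x|) ->
  P.-integrable D (EFin \o h).
Proof.
move=> mD mh hb.
have hi : P.-integrable D (fun x => ((`|c| + `|x|)%:E)).
  have h2 : P.-integrable D ((EFin \o cst `|c|) \+ (EFin \o (fun x : R => `|x|))).
    by apply: integrableD => //; [exact: int_cst | exact: int_abs].
  by apply: eq_integrable h2 => //.
apply: le_integrable hi => //; first by apply/measurable_EFinP.
move=> x _ /=; rewrite lee_fin.
by rewrite (ger0_norm (addr_ge0 (normr_ge0 c) (normr_ge0 x))).
Qed.

Lemma pp_ge0 (k x : R) : 0 <= pp k x.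
Proof. by rewrite /pp le_max lexx orbT. Qed.

Lemma cc_ge0 (k x : R) : 0 <= cc k x.
Proof. by rewrite /cc le_max lexx orbT. Qed.

Lemma pp_bnd (k x : R) : `|pp k x| <= `|k| + `|x|.
Proof.
rewrite (ger0_norm (pp_ge0 k x)) /pp ge_max addr_ge0 // andbT.
have := ler_norm k; have := ler_norm (- x); rewrite normrN; lra.
Qed.

Lemma cc_bnd (k x : R) : `|cc k x| <= `|k| + `|x|.
Proof.
rewrite (ger0_norm (cc_ge0 k x)) /cc ge_max addr_ge0 // andbT.
have := ler_norm x; have := ler_norm (- k); rewrite normrN; lra.
Qed.

Lemma pp_lip (k k' x : R) : `|pp k x - pp k' x| <= `|k - k'|.
Proof.
rewrite /pp; have := ler_norm (k - k'); have := ler_norm (- (k - k')); rewrite normrN.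
case: (leP (k - x) 0); case: (leP (k' - x) 0) => h1 h2 a1 a2.
all: rewrite ?(max_r (ltW _)) ?max_l ?max_r //; try lra.
all: rewrite ?ler_norml; try (apply/andP; split); lra.
Qed.

Lemma pp_split (k x : R) : pp k x = (k - x) + cc k x.
Proof.
rewrite /pp /cc; case: (leP (k - x) 0) => h.
  by rewrite max_l; lra.
by rewrite max_r; lra.
Qed.

Lemma int_pp' (D : set R) (k : R) : measurable D -> P.-integrable D (EFin \o pp k).
Proof. by move=> mD; apply: (int_bnd (c := k)) => //; [exact: mpp | exact: pp_bnd]. Qed.

Lemma int_cc (D : set R) (k : R) : measurable D -> P.-integrable D (EFin \o cc k).
Proof. by move=> mD; apply: (int_bnd (c := k)) => //; [exact: mcc | exact: cc_bnd]. Qed.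

Lemma PD_le1 (D : set R) : measurable D -> fine (P D) <= 1.
Proof.
move=> mD; have h := probability_le1 P mD.
have h0 : (0 <= P D)%E by exact: measure_ge0.
by rewrite -lee_fin fineK // ge0_fin_numE // (le_lt_trans h) // ltry.
Qed.

Lemma PD_ge0 (D : set R) : 0 <= fine (P D).
Proof. by rewrite fine_ge0 // measure_ge0. Qed.

Lemma lip (D : set R) (k k' : R) : measurable D ->
  `|\int[P]_(x in D) pp k x - \int[P]_(x in D) pp k' x| <= `|k - k'|.
Proof.
move=> mD; rewrite -RintegralB //; try exact: int_pp'.
have ib : P.-integrable D (EFin \o (fun x => pp k x - pp k' x)).
  apply: (int_bnd (c := k - k')) => //.
    by apply: measurable_funB; exact: mpp.
  by move=> x; apply: le_trans (pp_lip k k' x) _; rewrite lerDl.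
apply: le_trans (le_normr_Rintegral mD ib) _.
have ia : P.-integrable D (EFin \o (fun x => `|pp k x - pp k' x|)).
  apply: (int_bnd (c := k - k')) => //.
    by apply: measurableT_comp => //; apply: measurable_funB; exact: mpp.
  by move=> x; rewrite normr_id; apply: le_trans (pp_lip k k' x) _; rewrite lerDl.
apply: le_trans (le_Rintegral (f2 := cst `|k - k'|) mD ia (int_cst _ mD) _) _.
  by move=> x _; exact: pp_lip.
rewrite Rintegral_cst //.
by rewrite ler_piMr // PD_le1.
Qed.

Lemma parity (D : set R) (k : R) : measurable D ->
  \int[P]_(x in D) pp k x =
  k * fine (P D) - \int[P]_(x in D) (x : R) + \int[P]_(x in D) cc k x.
Proof.
move=> mD.
rewrite (eq_Rintegral _ (g := fun x : R => (k - x) + cc k x)); last by move=> x _; exact: pp_split.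
rewrite RintegralD //; last exact: int_cc.
  rewrite RintegralB //; first by rewrite Rintegral_cst.
    exact: int_cst.
  exact: int_id.
apply: (int_bnd (c := k)) => //.
  by apply: measurable_funB; [exact: measurable_cst | exact: measurable_id].
move=> x; have := ler_norm k; have := ler_norm (- x); have := ler_norm (- k);
have := ler_norm x; rewrite !normrN => *.
rewrite ler_norml; apply/andP; split; lra.
Qed.
End Meas.


Lemma int_mrestr (R : realType) (mu : {measure set R -> \bar R}) (D : set R)
  (mD : measurable D) (h : R -> \bar R) :
  measurable_fun setT h -> (forall x, 0 <= h x)%E ->
  (\int[mrestr mu mD]_x h x = \int[mu]_(x in D) h x)%E.
Proof.
move=> mh h0.
rewrite -(setUv D) ge0_integral_setU //; last 3 first.
- exact: measurableC.
- by rewrite setUv.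
- by apply/disj_set2P; rewrite setICr.
rewrite (@eq_measure_integral _ _ _ _ mu); last first.
  move=> A mA AD; transitivity (mu (A `&` D)); first by [].
  by congr (mu _); apply/seteqP; split => [x []//|x Ax]; split => //; apply: AD.
rewrite [X in (_ + X)%E](@eq_measure_integral _ _ _ _ mzero); last first.
  move=> A mA AD; transitivity (mu (A `&` D)); first by [].
  have -> : A `&` D = set0.
    by apply/seteqP; split => [x [/AD]|x []//].
  by rewrite measure0.
by rewrite integral_measure_zero adde0.
Qed.

Lemma Pput_muu (R : realType) (mu : probability R R) (G0 : R) (w : {nonneg R}) (k : R) :
  finite_first_moment mu ->
  Pput (measure_add (mrestr mu (measurable_itv `]-oo, G0[)) (mscale w \d_G0)) k
  = \int[mu]_(x in `]-oo, G0[%classic) pp k x + w%:num * pp k G0.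
Proof.
move=> fm.
rewrite /Pput ge0_integral_measure_add //; last 2 first.
- by move=> x _; rewrite lee_fin; exact: pp_ge0.
- by apply/measurable_EFinP; exact: mpp.
rewrite int_mrestr; last 2 first.
- by apply/measurable_EFinP; exact: mpp.
- by move=> x; rewrite lee_fin; exact: pp_ge0.
rewrite ge0_integral_mscale //; last 2 first.
- by apply/measurable_EFinP; exact: mpp.
- by move=> x _; rewrite lee_fin; exact: pp_ge0.
rewrite integral_dirac //; last by apply/measurable_EFinP; exact: mpp.
rewrite diracE mem_set // mul1e -EFinM fineD //.
have := @int_pp' _ mu fm `]-oo, G0[%classic k (measurable_itv _).
by move/integrable_fin_num; apply.
Qed.

Lemma cc_cvx (R : realType) (k : R) : cvx (cc k).
Proof.
move=> x y t /andP[t0 t1]; rewrite /cc ge_max; apply/andP; split.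
- have h1 : x - k <= Num.max (x - k) 0 by rewrite le_max lexx.
  have h2 : y - k <= Num.max (y - k) 0 by rewrite le_max lexx.
  have := ler_wpM2l t0 h1; have : 0 <= 1 - t by lra.
  move/ler_wpM2l => /(_ _ _ h2); nra.
- have h1 : 0 <= Num.max (x - k) 0 by rewrite le_max lexx orbT.
  have h2 : 0 <= Num.max (y - k) 0 by rewrite le_max lexx orbT.
  by apply: addr_ge0; apply: mulr_ge0 => //; lra.
Qed.

Lemma cc_to0 (R : realType) (nu : probability R R) (G0 eta : R) :
  finite_first_moment nu -> 0 < eta ->
  exists2 K, G0 <= K & \int[nu]_x cc K x < eta.
Proof.
move=> fm e0.
have := @dominated_cvg _ _ _ nu setT measurableT
  (fun n x => (cc n%:R x)%:E) (cst 0%E) (fun x => (`|x|)%:E).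
move=> /(_ _ _ _ _ _) H.
have H' : (fun n => (\int[nu]_x (cc n%:R x)%:E)%E) @ \oo --> (\int[nu]_x (cst 0%E) x)%E.
  apply: H.
  - by move=> n; apply/measurable_EFinP; exact: mcc.
  - move=> x _; apply: cvg_near_cst.
    near=> n.
    have : x <= n%:R by near: n; exact: nbhs_infty_ger.
    by move=> xn; rewrite /cc max_r //; lra.
  - by move=> x _.
  - exact: (int_abs fm measurableT).
  - move=> n x _; rewrite lee_fin /cc ger0_norm ?le_max ?lexx ?orbT //.
    rewrite ge_max normr_ge0 andbT.
    have := ler_norm x; have : (0:R) <= n%:R by [].
    lra.
rewrite integral0 in H'.
have /fine_cvgP [_ hc] := H'.
move/cvgrPdist_lt: hc => /(_ eta e0) hc.
have hall : \forall n \near \oo, (`|0 - fine (\int[nu]_x (cc n%:R x)%:E)%E| < eta) /\ G0 <= n%:R.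
  by near=> n; split; near: n; [exact: hc | exact: nbhs_infty_ger].
have [N _ hN] := hall.
have [h1 h2] := hN N (leqnn N).
exists N%:R => //.
move: h1; rewrite sub0r normrN /=.
by move/(le_lt_trans (ler_norm _)).
Unshelve. all: by end_near.
Qed.

Lemma lip_cont (R : realType) (F : R -> R) :
  (forall k k', `|F k - F k'| <= 3 * `|k - k'|) -> continuous F.
Proof.
move=> H x; apply/cvgrPdist_lt => e e0.
apply/nbhs_normP; exists (e / 4) => /=; first by rewrite divr_gt0.
move=> y /= hy.
apply: le_lt_trans (H x y) _.
lra.
Qed.


Theorem lemma4p3 (R : realType) (mu nu : probability R R) (G : R -> R) :
  finite_first_moment mu -> finite_first_moment nu ->
  cx_le mu nu ->
  is_interval [set k : R | 0 < Pput nu k - Pput mu k] ->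
  is_quantile mu G ->
  forall u : R, 0 < u < 1 ->
    has_left_deriv (conv_minorant (Eu mu nu G u)) (G u) (phifun mu nu G u) /\
    has_left_deriv (conv_minorant (Eu mu nu G u)) (Sfun mu nu G u)
                   (phifun mu nu G u).
Proof.
move=> fmu fnu cx _ qG u u01.
have /andP[u0 u1] := u01.
set G0 := G u.
pose D := `]-oo, G0[%classic.
have mD : measurable D by exact: measurable_itv.
pose p := fine (mu D).
have /andP[qlo _] := qG u u01.
have muD0 : (0 <= mu D)%E by exact: measure_ge0.
have muDfin : mu D \is a fin_num.
  by rewrite ge0_fin_numE // (le_lt_trans qlo) // ltry.
have p0 : 0 <= p by rewrite /p fine_ge0.
have pu : p <= u by rewrite /p -lee_fin fineK.
pose w := (atom_weight mu G u)%:num.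
have wE : w = u - p by rewrite /w /= max_l //; rewrite -/G0 -/D -/p; lra.
pose f := Eu mu nu G u.
pose Q k := \int[mu]_(x in D) pp k x.
have fE k : f k = Pput nu k - (Q k + w * pp k G0).
  by rewrite /f /Eu /mu_u Pput_muu.
pose mN := \int[nu]_x (x : R).
pose mM := \int[mu]_x (x : R).
pose M1 := \int[mu]_(x in D) (x : R).
pose Cn k := \int[nu]_x cc k x.
pose Cm k := \int[mu]_x cc k x.
have nuT : fine (nu setT) = 1 by rewrite probability_setT.
have muT : fine (mu setT) = 1 by rewrite probability_setT.
have parN k : Pput nu k = k - mN + Cn k.
  by have := parity fnu k measurableT; rewrite nuT mulr1.
have parM k : Pput mu k = k - mM + Cm k.
  by have := parity fmu k measurableT; rewrite muT mulr1.
have Qhi k : G0 <= k -> Q k = k * p - M1.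
  move=> Gk; rewrite /Q (parity fmu k mD) -/p -/M1.
  rewrite (eq_Rintegral _ (g := fun _ : R => 0)); last first.
    move=> x; rewrite inE /D /= in_itv /= => xG.
    by rewrite /cc max_r //; lra.
  by rewrite Rintegral_cst // mul0r addr0.
have mCD : measurable (~` D) by exact: measurableC.
have disD : [disjoint D & ~` D] by apply/disj_set2P; rewrite setICr.
have Qlo k : Q k <= Pput mu k.
  have -> : Pput mu k = \int[mu]_(x in setT) pp k x by [].
  have := @Rintegral_setU _ _ _ mu D (~` D) (pp k) mD mCD.
  rewrite setUv => /(_ (int_pp' fmu k measurableT) disD) ->.
  rewrite /Q lerDl; apply: Rintegral_ge0 => x _; exact: pp_ge0.
have Cle k : Cm k <= Cn k.
  have := cx (cc k) ((cvxP _).2 (cc_cvx k)).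
  rewrite /Cm /Cn /Rintegral => h; rewrite fine_le //.
  - exact: (integrable_fin_num measurableT (int_cc fmu k measurableT)).
  - exact: (integrable_fin_num measurableT (int_cc fnu k measurableT)).
pose T2 := \int[mu]_(x in ~` D) (x : R).
have splitM : mM = M1 + T2.
  have := @Rintegral_setU _ _ _ mu D (~` D) (fun x : R => x) mD mCD.
  by rewrite setUv => /(_ (int_id fmu measurableT) disD).
have pC : fine (mu (~` D)) = 1 - p.
  have := @Rintegral_setU _ _ _ mu D (~` D) (fun _ : R => 1) mD mCD.
  rewrite setUv => /(_ (int_cst mu 1 measurableT) disD).
  rewrite !Rintegral_cst // !mul1r muT -/p => ->; lra.
have tail : G0 * (1 - p) <= T2.
  rewrite -pC -Rintegral_cst //.
  apply: le_Rintegral => //; [exact: int_cst | exact: int_id |].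
  move=> x; rewrite /D /= in_itv /= => /negP; rewrite -leNgt //.
pose a := 1 - u.
pose b0 := M1 + w * G0 - mN.
have H2 K : G0 <= K -> f K - (a * K + b0) = Cn K.
  move=> GK; rewrite fE parN Qhi // /pp max_l; last lra.
  rewrite /a /b0 wE; ring.
have Cn0 K : 0 <= Cn K by apply: Rintegral_ge0 => x _; exact: cc_ge0.
have H1 k : k <= G0 -> a * (G0 - k) <= f k - (a * k + b0).
  move=> kG; rewrite fE /pp (max_r (_ : k - G0 <= 0)); last lra.
  have := Qlo k; rewrite parM parN => hq.
  have := Cle k; rewrite /a /b0 wE.
  rewrite splitM in hq.
  nra.
have w0 : 0 <= w by rewrite wE; lra.
have w1 : w <= 1 by rewrite wE; lra.
have fc : continuous f.
  apply: lip_cont => k k'.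
  have hA : `|Pput nu k - Pput nu k'| <= `|k - k'| := lip fnu k k' measurableT.
  have hB : `|Q k - Q k'| <= `|k - k'| := lip fmu k k' mD.
  have hC := pp_lip k k' G0.
  move: hA hB hC; rewrite !ler_norml => /andP[hA1 hA2] /andP[hB1 hB2] /andP[hC1 hC2].
  have d0 := normr_ge0 (k - k').
  rewrite !fE; apply/andP; split; nra.
have a0 : 0 < a by rewrite /a; lra.
have hne : exists g0, CMset f g0.
  exists (fun z => a * z + b0); apply: aff_CM => z.
  have [zG|Gz] := leP z G0.
    have := H1 z zG; have : 0 <= a * (G0 - z) by rewrite mulr_ge0 //; lra.
    lra.
  have := H2 z (ltW Gz); have := Cn0 z; lra.
have H2' K : G0 <= K -> 0 <= f K - (a * K + b0) by move=> GK; rewrite H2.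
have H3 eta : 0 < eta -> exists2 K, G0 <= K & f K - (a * K + b0) < eta.
  move=> e0; have [K GK hK] := cc_to0 G0 fnu e0.
  by exists K => //; rewrite H2.
have [z [Gz [s hs]]] := touch fc a0 H1 H2' H3.
have Tne : Tset f G0 !=set0.
  exists z; split => //; apply/eqP; rewrite eq_le cm_le //=.
  have hl : forall k, s * k + (f z - s * z) <= f k.
    by move=> k; have := hs k; lra.
  have := cm_ge z (aff_CM hl).
  by have -> : s * z + (f z - s * z) = f z by ring.
exact: (abstract_main hne fc Tne).
Qed.
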